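(* Let $(G,\omega,\mu)$ be an infinite, connected weighted graph, and let $d$ be a pseudo metric on $G$ which is intrinsic, has finite jump size $s$, and such that every ball $B_r(x)$ ($x\in G$, $r>0$) is a finite set. Let $V:G\to\mathbb{R}$ satisfy $c_0:=\inf_G V>0$. Let $u:G\to\mathbb{R}$ be a solution of $$\Delta u - Vu = 0 \quad\text{in } G.$$ Let $p\ge 2$ and $\beta>0$ be such that $$\beta^2 e^{2s\beta} < 2c_0 p .$$ Fix $x_0\in G$ and suppose $u\in \ell^p_{\varphi_\beta}(G,\mu)$, where $\varphi_\beta(x)=e^{-\beta d(x,x_0)}$. Then $u(x)=0$ for all $x\in G$.
   Context: A weighted graph $(G,\omega,\mu)$: $G$ is a countable set, $\mu:G\to(0,\infty)$, and $\omega:G\times G\to[0,\infty)$ satisfies $\omega(x,x)=0$, $\omega(x,y)=\omega(y,x)$, $\sum_{y}\omega(x,y)<\infty$ for all $x$. Write $x\sim y$ iff $\omega(x,y)>0$; the graph is connected if any two vertices are joined by a finite path $x_0\sim x_1\sim\dots\sim x_n$. The Laplacian is $\Delta f(x)=\frac{1}{\mu(x)}\sum_{y\in G}[f(y)-f(x)]\omega(x,y)$ (well defined here since the graph is locally finite under the assumptions). A pseudo metric $d$ on $G$ is a symmetric function $G\times G\to[0,\infty)$ with $d(x,x)=0$ satisfying the triangle inequality (possibly $d(x,y)=0$ for $x\ne y$). Its jump size is $s:=\sup\{d(x,y): x,y\in G,\ \omega(x,y)>0\}$. For $q\ge1$, $C_0>0$, $d$ is $q$-intrinsic with bound $C_0$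 if $\frac{1}{\mu(x)}\sum_{y}\omega(x,y)d^q(x,y)\le C_0$ for all $x\in G$; $d$ is called intrinsic if it is $2$-intrinsic with bound $1$. Balls: $B_r(x_0)=\{x\in G: d(x,x_0)<r\}$. For $\varphi:G\to(0,\infty)$ and $p\in[1,\infty)$, $\ell^p_\varphi(G,\mu)=\{u:G\to\mathbb{R}:\ \sum_{x\in G}|u(x)|^p\varphi(x)\mu(x)<\infty\}$. *)

(* Defs.v *)
From mathcomp Require Import all_boot all_order all_algebra.
From mathcomp Require Import all_classical all_reals all_analysis.
Set Implicit Arguments. Unset Strict Implicit. Unset Printing Implicit Defensive.
Import Order.TTheory GRing.Theory Num.Theory.
Local Open Scope classical_set_scope.
Local Open Scope ring_scope.

Section Defs.
Variables (R : realType) (G : countType).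

Definition weighted_graph (w : G -> G -> R) (mu : G -> R) : Prop :=
  [/\ forall x, 0 < mu x,
      forall x y, 0 <= w x y,
      forall x, w x x = 0,
      forall x y, w x y = w y x &
      forall x, (\esum_(y in [set: G]) (w x y)%:E < +oo)%E].

Definition adj (w : G -> G -> R) : rel G := fun x y => 0 < w x y.

Definition connected_graph (w : G -> G -> R) : Prop :=
  forall x y : G, exists p : seq G, path (adj w) x p /\ last x p = y.

Definition pseudo_metric (d : G -> G -> R) : Prop :=
  [/\ forall x y, 0 <= d x y,
      forall x, d x x = 0,
      forall x y, d x y = d y x &
      forall x y z, d x z <= d x y + d y z].

Definition edge_lengths (w d : G -> G -> R) : set R :=
  [set r | exists x y, 0 < w x y /\ r = d x y].

Definition jump_size (w d : G -> G -> R) : R := sup (edge_lengths w d).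

Definition q_intrinsic (w : G -> G -> R) (mu : G -> R) (d : G -> G -> R)
    (q C0 : R) : Prop :=
  forall x, (((mu x)^-1)%:E * (\esum_(y in [set: G]) (w x y * d x y `^ q)%:E)
             <= C0%:E)%E.

Definition intrinsic w mu d : Prop := q_intrinsic w mu d 2 1.

Definition dball (d : G -> G -> R) (x : G) (r : R) : set G :=
  [set y | d y x < r].

(* Laplacian; the sum is over the (finite, by local finiteness) support *)
Definition laplacian (w : G -> G -> R) (mu : G -> R) (f : G -> R) (x : G) : R :=
  (mu x)^-1 * \sum_(y \in [set: G]) ((f y - f x) * w x y).

Definition in_lp_weighted (mu phi : G -> R) (p : R) (u : G -> R) : Prop :=
  (\esum_(x in [set: G]) (`|u x| `^ p * phi x * mu x)%:E < +oo)%E.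

End Defs.

(* Main.v *)
Require Import Defs.
From mathcomp Require Import all_boot all_order all_algebra.
From mathcomp Require Import all_classical all_reals all_analysis.
From mathcomp Require Import ring lra.
Import Order.TTheory GRing.Theory Num.Theory.
Local Open Scope classical_set_scope.
Local Open Scope ring_scope.

Section Real.
Variable R : realType.

Lemma sym_pair (a b zx zy : R) :
  zx ^+ 2 * a * (b - a) + zy ^+ 2 * b * (a - b) <= (a ^+ 2 + b ^+ 2) / 2 * (zy - zx) ^+ 2.
Proof.
rewrite -subr_ge0.
have -> : (a ^+ 2 + b ^+ 2) / 2 * (zy - zx) ^+ 2 - (zx ^+ 2 * a * (b - a) + zy ^+ 2 * b * (a - b))
  = ((a - b) * (zy - zx)) ^+ 2 / 2 + (b * zy - a * zx) ^+ 2 by field.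
by rewrite addr_ge0 // ?divr_ge0 // sqr_ge0.
Qed.

Lemma expR_sub1 (z : R) : `|expR z - 1| <= `|z| * expR `|z|.
Proof.
have [z0|z0] := leP 0 z.
  have e1 : 1 <= expR z by rewrite -expR0 ler_expR.
  rewrite !ger0_norm ?subr_ge0 //.
  have h := expR_ge1Dx (- z); rewrite expRN in h.
  have ez := expR_gt0 z.
  have : (1 - z) * expR z <= 1.
    rewrite [X in _ <= X](_ : 1 = (expR z)^-1 * expR z); last by rewrite mulVf // gt_eqF.
    by rewrite ler_wpM2r // ltW.
  lra.
have e1 : expR z <= 1 by rewrite expR_le1; apply: ltW.
have -> : `|expR z - 1| = 1 - expR z by rewrite distrC ger0_norm // subr_ge0.
have -> : `|z| = - z by rewrite ltr0_norm.
have h := expR_ge1Dx z.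
have h2 : 1 <= expR (- z) by rewrite -expR0 ler_expR lerNr oppr0; apply: ltW.
have h3 : - z <= - z * expR (- z).
  by rewrite -{1}(mulr1 (-z)) ler_wpM2l // oppr_ge0 ltW.
lra.
Qed.

Lemma expR_sub1_sq (z : R) : (expR z - 1) ^+ 2 <= z ^+ 2 * expR (2 * `|z|).
Proof.
rewrite expRM_natl -(real_normK (num_real (expR z - 1))) -(real_normK (num_real z)).
have h := expR_sub1 z; have h0 := normr_ge0 (expR z - 1).
have h1 := normr_ge0 z; have h2 := expR_ge0 `|z|.
rewrite -exprMn; apply: lerXn2r => //; rewrite nnegrE ?mulr_ge0 //.
Qed.

Definition pp (a : R) := if 0 <= a then a else 0.

Lemma pp_ge0 a : 0 <= pp a. Proof. by rewrite /pp; case: ifP. Qed.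

Lemma clamp_lip (a b : R) : `|pp a - pp b| <= `|a - b|.
Proof.
rewrite /pp; case: ifP => ha; case: ifP => hb.
- by [].
- move/negbT: hb; rewrite -ltNge => hb.
  rewrite subr0 !ger0_norm //; [lra | lra].
- move/negbT: ha; rewrite -ltNge => ha.
  rewrite sub0r normrN [X in _ <= X]ler0_norm ?ger0_norm //; lra.
- by rewrite subrr normr0.
Qed.

Lemma bernoulli_powR (a b q : R) : 0 < a -> 0 <= b -> 1 <= q ->
  q * a `^ (q - 1) * (b - a) <= b `^ q - a `^ q.
Proof.
move=> a0 b0 q1.
have [->|qn1] := eqVneq q 1.
  by rewrite subrr powRr0 !mul1r !powRr1 // ltW.
have q1' : 1 < q by rewrite lt_neqAle eq_sym qn1.
pose q' := q / (q - 1).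
have qm0 : 0 < q - 1 by rewrite subr_gt0.
have q'0 : 0 < q' by rewrite divr_gt0 // (lt_trans ltr01).
have q0 : 0 < q by apply: (lt_trans ltr01).
have hq : q^-1 + q'^-1 = 1.
  rewrite /q' invf_div; field; rewrite ?gt_eqF //.
have := @conjugate_powR R (a `^ (q - 1)) b q' q (powR_ge0 _ _) b0 q'0 q0.
rewrite addrC hq => /(_ erefl).
rewrite -powRrM.
have -> : (q - 1) * q' = q by rewrite /q'; field; rewrite gt_eqF.
move=> H.
have haq : a * a `^ (q - 1) = a `^ q by rewrite mulr_powRB1 // ltW.
have -> : q * a `^ (q - 1) * (b - a) = q * (a `^ (q - 1) * b) - q * a `^ q.
  by rewrite -haq; ring.
have : q * (a `^ (q - 1) * b) <= q * (a `^ q / q' + b `^ q / q).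
  by rewrite ler_pM2l.
have -> : q * (a `^ q / q' + b `^ q / q) = (q - 1) * a `^ q + b `^ q.
  by rewrite /q'; field; rewrite ?gt_eqF.
lra.
Qed.

Lemma pp_pos (a : R) : pp a != 0 -> 0 < a.
Proof.
rewrite /pp; case: ifP => h; last by rewrite eqxx.
by move=> an0; rewrite lt_neqAle eq_sym an0 h.
Qed.

Lemma pp_id (a : R) : 0 <= a -> pp a = a.
Proof. by rewrite /pp => ->. Qed.
End Real.
Arguments pp_pos {R}. Arguments pp_id {R}.
Arguments pp {R}. Arguments expR_sub1_sq {R}. Arguments clamp_lip {R}.
Arguments bernoulli_powR {R}. Arguments sym_pair {R}. Arguments expR_sub1 {R}. Arguments pp_ge0 {R}.


Section Helpers.
Variables (R : realType) (G : countType) (w : G -> G -> R) (mu : G -> R)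
  (d : G -> G -> R).
Hypothesis Hw : weighted_graph w mu.
Hypothesis Hd : pseudo_metric d.
Hypothesis Hint : intrinsic w mu d.
Hypothesis Hub : has_ubound (edge_lengths w d).

Let s := jump_size w d.

Lemma w_ge0 x y : 0 <= w x y. Proof. by case: Hw. Qed.
Lemma mu_gt0 x : 0 < mu x. Proof. by case: Hw. Qed.
Lemma w_sym x y : w x y = w y x. Proof. by case: Hw. Qed.
Lemma d_ge0 x y : 0 <= d x y. Proof. by case: Hd. Qed.
Lemma d_sym x y : d x y = d y x. Proof. by case: Hd. Qed.
Lemma d_tri x y z : d x z <= d x y + d y z. Proof. by case: Hd. Qed.

Lemma edge_le x y : 0 < w x y -> d x y <= s.
Proof. by move=> h; apply: ub_le_sup => //; exists x, y. Qed.

Lemma sum_le_esum (S : seq G) (g : G -> R) : uniq S -> (forall x, 0 <= g x) ->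
  ((\sum_(x <- S) g x)%:E <= \esum_(x in [set: G]) (g x)%:E)%E.
Proof.
move=> uS g0; apply: esum_ge; exists [set` S].
  by split => //; exact: finite_seq.
rewrite fsumEFin; last exact: finite_seq.
by rewrite -fsbig_seq.
Qed.

Lemma intr_fin x (S : seq G) : uniq S ->
  \sum_(y <- S) w x y * d x y ^+ 2 <= mu x.
Proof.
move=> uS; have := Hint x; rewrite /intrinsic /q_intrinsic.
have H1 := @sum_le_esum S (fun y => w x y * d x y `^ 2) uS
  (fun y => mulr_ge0 (w_ge0 x y) (powR_ge0 _ _)).
move=> H2.
have H3 : (((mu x)^-1 * \sum_(y <- S) w x y * d x y `^ 2)%:E <= 1%:E)%E.
  rewrite EFinM; apply: le_trans H2; apply: lee_wpmul2l => //.
  by rewrite lee_fin invr_ge0 ltW // mu_gt0.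
rewrite lee_fin in H3.
have mx := mu_gt0 x.
have mxi : 0 < (mu x)^-1 by rewrite invr_gt0.
rewrite -(ler_pM2l mxi) mulVf ?gt_eqF //.
apply: le_trans H3; rewrite le_eqVlt; apply/orP; left; apply/eqP; congr (_ * _).
apply: eq_bigr => y _; rewrite powR_mulrn // d_ge0 //.
Qed.

Lemma lap_sum (f : G -> R) x (S : seq G) : uniq S ->
  (forall y, 0 < w x y -> y \in S) ->
  mu x * laplacian w mu f x = \sum_(y <- S) (f y - f x) * w x y.
Proof.
move=> uS hS; rewrite /laplacian mulrA mulfV ?gt_eqF ?mu_gt0 // mul1r.
rewrite fsbig_supp; apply: fsbig_fwiden => //.
  move=> y [_ /= hy]; apply: hS; rewrite lt_neqAle w_ge0 andbT eq_sym.
  by apply/eqP => h; apply: hy; rewrite h mulr0.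
move=> y [_ /= hy]; apply/eqP/negPn/negP => h; apply: hy; split => //.
by apply/eqP.
Qed.


Lemma edge_facts x y x0 : 0 < w x y ->
  [/\ 0 <= d x y, d x y <= s, 0 <= s & `|d y x0 - d x x0| <= d x y].
Proof.
move=> h; have t0 := d_ge0 x y; have ts := @edge_le x y h.
split => //; first exact: le_trans ts.
rewrite ler_norml; have h1 := d_tri y x x0; have h2 := d_tri x y x0.
rewrite (d_sym y x) in h1; apply/andP; split; lra.
Qed.

Lemma phi_ratio (beta : R) x y x0 : 0 < beta -> 0 < w x y ->
  expR (- beta * d y x0) <= expR (2 * s * beta) * expR (- beta * d x x0).
Proof.
move=> b0 h; have [t0 ts s0 hd] := @edge_facts x y x0 h.
rewrite -expRD ler_expR; move: hd; rewrite ler_norml => /andP[h1 h2].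
nra.
Qed.

Lemma ee_sq (beta : R) x x0 : expR (- (beta / 2) * d x x0) ^+ 2 = expR (- beta * d x x0).
Proof. by rewrite -expRM_natl; congr expR; field. Qed.

Lemma e_diff (beta : R) x y x0 : 0 < beta -> 0 < w x y ->
  (expR (- (beta / 2) * d y x0) - expR (- (beta / 2) * d x x0)) ^+ 2 <=
  beta ^+ 2 * expR (2 * s * beta) / 4 * d x y ^+ 2 * expR (- beta * d x x0).
Proof.
move=> b0 h; have [t0 ts s0 hd] := @edge_facts x y x0 h.
set z := - (beta / 2) * (d y x0 - d x x0).
have -> : expR (- (beta / 2) * d y x0) = expR (- (beta / 2) * d x x0) * expR z.
  by rewrite -expRD; congr expR; rewrite /z; ring.
have -> : expR (- (beta / 2) * d x x0) * expR z - expR (- (beta / 2) * d x x0) =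
  expR (- (beta / 2) * d x x0) * (expR z - 1) by ring.
rewrite exprMn ee_sq.
have hz := expR_sub1_sq z.
have hz2 : z ^+ 2 <= beta ^+ 2 / 4 * d x y ^+ 2.
  rewrite /z exprMn; have -> : (- (beta / 2)) ^+ 2 = beta ^+ 2 / 4.
    by rewrite sqrrN; field.
  rewrite ler_wpM2l ?divr_ge0 ?sqr_ge0 //.
  rewrite -(real_normK (num_real (d y x0 - d x x0))).
  apply: lerXn2r => //; rewrite nnegrE //.
have hz3 : expR (2 * `|z|) <= expR (2 * s * beta).
  have bh : 0 <= beta / 2 by rewrite divr_ge0 // ltW.
  rewrite ler_expR /z normrM normrN (ger0_norm bh).
  have hb : beta * `|d y x0 - d x x0| <= beta * s.
    by apply: ler_wpM2l; [exact: ltW | exact: le_trans hd ts].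
  have -> : 2 * (beta / 2 * `|d y x0 - d x x0|) = beta * `|d y x0 - d x x0| by field.
  have : 0 <= beta * s by rewrite mulr_ge0 // ltW.
  lra.
have e0 := expR_gt0 (- beta * d x x0).
have e1 := expR_gt0 (2 * s * beta).
have z0 := sqr_ge0 z.
have := expR_ge0 (2 * `|z|).
have : (expR z - 1) ^+ 2 <= beta ^+ 2 * expR (2 * s * beta) / 4 * d x y ^+ 2.
  apply: (le_trans hz).
  have -> : beta ^+ 2 * expR (2 * s * beta) / 4 * d x y ^+ 2 =
            (beta ^+ 2 / 4 * d x y ^+ 2) * expR (2 * s * beta) by ring.
  apply: ler_pM => //.
move=> H _; rewrite mulrC; apply: ler_wpM2r => //; exact: ltW.
Qed.

Lemma eta_diff (k : R) x y x0 : 0 < k -> 0 < w x y ->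
  (pp (1 - d y x0 / k) - pp (1 - d x x0 / k)) ^+ 2 <= d x y ^+ 2 / k ^+ 2.
Proof.
move=> k0 h; have [t0 ts s0 hd] := @edge_facts x y x0 h.
have h1 := clamp_lip (1 - d y x0 / k) (1 - d x x0 / k).
have e : 1 - d y x0 / k - (1 - d x x0 / k) = (d x x0 - d y x0) / k.
  by field; rewrite gt_eqF.
have ik : 0 < k^-1 by rewrite invr_gt0.
rewrite e normrM (gtr0_norm ik) (distrC (d x x0)) in h1.
have h2 : `|pp (1 - d y x0 / k) - pp (1 - d x x0 / k)| <= d x y / k.
  apply: le_trans h1 _; apply: ler_wpM2r => //; exact: ltW.
rewrite -(real_normK (num_real (pp (1 - d y x0 / k) - pp (1 - d x x0 / k)))).
rewrite -expr_div_n; apply: lerXn2r => //; rewrite nnegrE divr_ge0 //; exact: ltW.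
Qed.


Lemma zeta_diff (beta k : R) x y x0 : 0 < beta -> 0 < k -> 0 < w x y ->
  (expR (- (beta / 2) * d y x0) * pp (1 - d y x0 / k) -
   expR (- (beta / 2) * d x x0) * pp (1 - d x x0 / k)) ^+ 2 <=
  2 * d x y ^+ 2 * expR (- beta * d x x0) *
  (beta ^+ 2 * expR (2 * s * beta) / 4 * pp (1 - d x x0 / k) ^+ 2 +
   expR (2 * s * beta) / k ^+ 2).
Proof.
move=> b0 k0 h.
have hA := @phi_ratio beta x y x0 b0 h.
have hB := @e_diff beta x y x0 b0 h.
have hC := @eta_diff k x y x0 k0 h.
set ey := expR (- (beta / 2) * d y x0) in hB *.
set ex := expR (- (beta / 2) * d x x0) in hB *.
set ny := pp (1 - d y x0 / k) in hC *.
set nx := pp (1 - d x x0 / k) in hC *.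
set E := expR (2 * s * beta) in hA hB *.
have eyq : ey ^+ 2 = expR (- beta * d y x0) by rewrite /ey ee_sq.
set py := expR (- beta * d y x0) in hA eyq.
set px := expR (- beta * d x x0) in hA hB *.
have -> : ey * ny - ex * nx = ey * (ny - nx) + nx * (ey - ex) by ring.
have sq : forall a b : R, (a + b) ^+ 2 <= 2 * a ^+ 2 + 2 * b ^+ 2.
  by move=> a b; have := sqr_ge0 (a - b); nra.
apply: (le_trans (sq _ _)).
have h1 : (ey * (ny - nx)) ^+ 2 <= E * px * (d x y ^+ 2 / k ^+ 2).
  rewrite exprMn eyq; apply: ler_pM => //.
  - by rewrite /py expR_ge0.
  - exact: sqr_ge0.
have h2 : (nx * (ey - ex)) ^+ 2 <= nx ^+ 2 *
    (beta ^+ 2 * E / 4 * d x y ^+ 2 * px).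
  by rewrite exprMn; apply: ler_wpM2l => //; exact: sqr_ge0.
have -> : 2 * d x y ^+ 2 * px * (beta ^+ 2 * E / 4 * nx ^+ 2 + E / k ^+ 2) =
  2 * (E * px * (d x y ^+ 2 / k ^+ 2)) +
  2 * (nx ^+ 2 * (beta ^+ 2 * E / 4 * d x y ^+ 2 * px)).
  by field; rewrite gt_eqF.
lra.
Qed.

Lemma symm_bound (S : seq G) (W z : G -> R) :
  \sum_(x <- S) \sum_(y <- S) w x y * z x ^+ 2 * W x * (W y - W x) <=
  2^-1 * \sum_(x <- S) \sum_(y <- S) w x y * W x ^+ 2 * (z y - z x) ^+ 2.
Proof.
pose T x y := w x y * z x ^+ 2 * W x * (W y - W x).
pose U x y := w x y * W x ^+ 2 * (z y - z x) ^+ 2.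
change (\sum_(x <- S) \sum_(y <- S) T x y <= 2^-1 * \sum_(x <- S) \sum_(y <- S) U x y).
have eT : \sum_(x <- S) \sum_(y <- S) T x y = \sum_(x <- S) \sum_(y <- S) T y x.
  by rewrite exchange_big.
have eU : \sum_(x <- S) \sum_(y <- S) U x y = \sum_(x <- S) \sum_(y <- S) U y x.
  by rewrite exchange_big.
have sp : forall F1 F2 : G -> G -> R,
  \sum_(x <- S) \sum_(y <- S) (F1 x y + F2 x y) =
  \sum_(x <- S) \sum_(y <- S) F1 x y + \sum_(x <- S) \sum_(y <- S) F2 x y.
  by move=> F1 F2; rewrite -big_split; apply: eq_bigr => x _; rewrite big_split.
have key : \sum_(x <- S) \sum_(y <- S) (T x y + T y x) <=
           \sum_(x <- S) \sum_(y <- S) (2^-1 * U x y + 2^-1 * U y x).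
  apply: ler_sum => x _; apply: ler_sum => y _.
  rewrite /T /U (w_sym y x).
  have hw := w_ge0 x y.
  have hp := sym_pair (W x) (W y) (z x) (z y).
  have -> : w x y * z x ^+ 2 * W x * (W y - W x) + w x y * z y ^+ 2 * W y * (W x - W y)
    = w x y * (z x ^+ 2 * W x * (W y - W x) + z y ^+ 2 * W y * (W x - W y)) by ring.
  have -> : 2^-1 * (w x y * W x ^+ 2 * (z y - z x) ^+ 2) +
            2^-1 * (w x y * W y ^+ 2 * (z x - z y) ^+ 2) =
            w x y * ((W x ^+ 2 + W y ^+ 2) / 2 * (z y - z x) ^+ 2) by field.
  by apply: ler_wpM2l.
have half : forall F : G -> G -> R,
  \sum_(x <- S) \sum_(y <- S) (2^-1 * F x y) = 2^-1 * \sum_(x <- S) \sum_(y <- S) F x y.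
  by move=> F; rewrite mulr_sumr; apply: eq_bigr => x _; rewrite mulr_sumr.
rewrite (sp T (fun x y => T y x)) (sp (fun x y => 2^-1 * U x y) (fun x y => 2^-1 * U y x)) in key.
rewrite (half U) (half (fun x y => U y x)) -eT -eU in key.
lra.
Qed.


Lemma energy (W : G -> R) (c beta k : R) (x0 : G) (S : seq G) :
  uniq S ->
  (forall x y, pp (1 - d x x0 / k) != 0 -> 0 < w x y -> y \in S) ->
  (forall x, 0 <= W x) -> 0 < beta -> 0 < k ->
  (forall x (S : seq G), uniq S -> (forall y, 0 < w x y -> y \in S) ->
     c * mu x * W x <= \sum_(y <- S) (W y - W x) * w x y) ->
  c * \sum_(x <- S) mu x * W x ^+ 2 * expR (- beta * d x x0) * pp (1 - d x x0 / k) ^+ 2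
  <= beta ^+ 2 * expR (2 * s * beta) / 4 *
     \sum_(x <- S) mu x * W x ^+ 2 * expR (- beta * d x x0) * pp (1 - d x x0 / k) ^+ 2
   + expR (2 * s * beta) / k ^+ 2 *
     \sum_(x <- S) mu x * W x ^+ 2 * expR (- beta * d x x0).
Proof.
move=> uS nbS W0 b0 k0 HW.
set E := expR (2 * s * beta).
set kap := beta ^+ 2 * E / 4.
pose eta x := pp (1 - d x x0 / k).
pose phi x := expR (- beta * d x x0).
pose zeta x := expR (- (beta / 2) * d x x0) * eta x.
have ez : forall x, zeta x ^+ 2 = phi x * eta x ^+ 2.
  by move=> x; rewrite /zeta exprMn ee_sq.
have stepA : c * \sum_(x <- S) mu x * W x ^+ 2 * phi x * eta x ^+ 2 <=
  \sum_(x <- S) \sum_(y <- S) w x y * zeta x ^+ 2 * W x * (W y - W x).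
  rewrite mulr_sumr; apply: ler_sum => x _.
  have -> : \sum_(y <- S) w x y * zeta x ^+ 2 * W x * (W y - W x) =
    zeta x ^+ 2 * W x * \sum_(y <- S) (W y - W x) * w x y.
    by rewrite mulr_sumr; apply: eq_bigr => y _; ring.
  have [e0|en0] := eqVneq (eta x) 0.
    have : zeta x = 0 by rewrite /zeta e0 mulr0.
    by move=> ->; rewrite e0 !expr0n /= !mulr0 !mul0r.
  have -> : c * (mu x * W x ^+ 2 * phi x * eta x ^+ 2) = zeta x ^+ 2 * W x * (c * mu x * W x).
    by rewrite ez; ring.
  apply: ler_wpM2l; first by rewrite mulr_ge0 // sqr_ge0.
  by apply: HW => // y; apply: nbS.
have stepB := symm_bound S W zeta.
have stepC : \sum_(x <- S) \sum_(y <- S) w x y * W x ^+ 2 * (zeta y - zeta x) ^+ 2 <=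
  \sum_(x <- S) W x ^+ 2 * (2 * phi x * (kap * eta x ^+ 2 + E / k ^+ 2)) * mu x.
  apply: ler_sum => x _.
  apply: (@le_trans _ _ (\sum_(y <- S) W x ^+ 2 * (2 * phi x * (kap * eta x ^+ 2 + E / k ^+ 2)) *
                         (w x y * d x y ^+ 2))).
    apply: ler_sum => y _.
    have [hw|hw] := eqVneq (w x y) 0; first by rewrite hw !mul0r mulr0.
    have hwp : 0 < w x y by rewrite lt_neqAle eq_sym hw w_ge0.
    have hz := @zeta_diff beta k x y x0 b0 k0 hwp.
    have -> : W x ^+ 2 * (2 * phi x * (kap * eta x ^+ 2 + E / k ^+ 2)) * (w x y * d x y ^+ 2)
      = w x y * W x ^+ 2 * (2 * d x y ^+ 2 * phi x * (kap * eta x ^+ 2 + E / k ^+ 2)) by ring.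
    apply: ler_wpM2l; first by rewrite mulr_ge0 // ?w_ge0 // sqr_ge0.
    exact: hz.
  rewrite -mulr_sumr; apply: ler_wpM2l; last exact: intr_fin.
  rewrite mulr_ge0 ?sqr_ge0 // mulr_ge0 // ?mulr_ge0 // ?expR_ge0 //.
  have hk : 0 <= kap by rewrite /kap divr_ge0 // mulr_ge0 ?sqr_ge0 ?expR_ge0.
  apply: addr_ge0; [apply: mulr_ge0 => //; exact: sqr_ge0 | apply: divr_ge0; [exact: expR_ge0 | exact: sqr_ge0]].
have eq : 2^-1 * \sum_(x <- S) W x ^+ 2 * (2 * phi x * (kap * eta x ^+ 2 + E / k ^+ 2)) * mu x =
  kap * \sum_(x <- S) mu x * W x ^+ 2 * phi x * eta x ^+ 2 +
  E / k ^+ 2 * \sum_(x <- S) mu x * W x ^+ 2 * phi x.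
  rewrite !mulr_sumr -big_split; apply: eq_bigr => x _ /=; field.
  by rewrite gt_eqF.
have : c * \sum_(x <- S) mu x * W x ^+ 2 * phi x * eta x ^+ 2 <=
  kap * \sum_(x <- S) mu x * W x ^+ 2 * phi x * eta x ^+ 2 +
  E / k ^+ 2 * \sum_(x <- S) mu x * W x ^+ 2 * phi x.
  rewrite -eq; apply: (le_trans stepA); apply: (le_trans stepB).
  by apply: ler_wpM2l => //; rewrite invr_ge0.
by [].
Qed.


Lemma key (W : G -> R) (c beta : R) (x0 : G) :
  (forall x r, 0 < r -> finite_set (dball d x r)) ->
  (forall x, 0 <= W x) -> 0 < beta ->
  (forall x (S : seq G), uniq S -> (forall y, 0 < w x y -> y \in S) ->
     c * mu x * W x <= \sum_(y <- S) (W y - W x) * w x y) ->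
  beta ^+ 2 * expR (2 * s * beta) < 4 * c ->
  (\esum_(x in [set: G]) (W x ^+ 2 * expR (- beta * d x x0) * mu x)%:E < +oo)%E ->
  forall x, W x = 0.
Proof.
move=> Hfin W0 b0 HW Hc Hl x1.
set E := expR (2 * s * beta) in Hc *.
set kap := beta ^+ 2 * E / 4.
have kc : kap < c by rewrite /kap; lra.
pose phi x := expR (- beta * d x x0).
set Sf := fine (\esum_(x in [set: G]) (W x ^+ 2 * expR (- beta * d x x0) * mu x)%:E).
have Sfb : forall S : seq G, uniq S -> \sum_(x <- S) mu x * W x ^+ 2 * phi x <= Sf.
  move=> S uS.
  have h := @sum_le_esum S (fun x => W x ^+ 2 * expR (- beta * d x x0) * mu x) uS.
  have h0 : forall x, 0 <= W x ^+ 2 * expR (- beta * d x x0) * mu x.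
    by move=> x; rewrite mulr_ge0 ?mulr_ge0 ?sqr_ge0 ?expR_ge0 // ltW // mu_gt0.
  have hge : (0 <= \esum_(x in [set: G]) (W x ^+ 2 * expR (- beta * d x x0) * mu x)%:E)%E.
    by apply: esum_ge0 => x _; rewrite lee_fin.
  rewrite -lee_fin /Sf fineK; last first.
    by rewrite ge0_fin_numE //.
  apply: le_trans (h h0); rewrite lee_fin le_eqVlt; apply/orP; left; apply/eqP.
  by apply: eq_bigr => x _; rewrite /phi; ring.
have mainK : forall k, 1 <= k -> 2 * d x1 x0 <= k ->
    (c - kap) * (mu x1 * W x1 ^+ 2 * phi x1) / 4 * k ^+ 2 <= E * Sf.
  move=> k k1 kd.
  have k0 : 0 < k by lra.
  set r := k + `|s| + 1.
  have r0 : 0 < r by rewrite /r; have := normr_ge0 s; lra.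
  pose S : seq G := finmap.enum_fset (fset_set (dball d x0 r)).
  have uS : uniq S by apply: finmap.fset_uniq.
  have memS : forall y, d y x0 < r -> y \in S.
    move=> y hy; rewrite /S in_fset_set; last exact: Hfin.
    by rewrite inE.
  have nbS : forall x y, pp (1 - d x x0 / k) != 0 -> 0 < w x y -> y \in S.
    move=> x y /pp_pos hx hw; apply: memS.
    have [t0 ts s0 hd] := @edge_facts x y x0 hw.
    have hxk : d x x0 < k.
      have e : d x x0 = d x x0 / k * k by field; rewrite gt_eqF.
      rewrite e; move: hx; set q := d x x0 / k => hx; nra.
    have := ler_norm s; move: hd; rewrite ler_norml => /andP[_ h2]; rewrite /r; lra.
  have en := @energy W c beta k x0 S uS nbS W0 b0 k0 HW.
  set A1 := \sum_(x <- S) _ in en.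
  set A2 := \sum_(x <- S) _ in en.
  have A2b : A2 <= Sf by apply: Sfb.
  have x1S : x1 \in S by apply: memS; have := d_ge0 x1 x0; rewrite /r; have := normr_ge0 s; lra.
  have eta1 : 2^-1 <= pp (1 - d x1 x0 / k).
    have h1 : d x1 x0 / k <= 2^-1.
      have e : d x1 x0 = d x1 x0 / k * k by field; rewrite gt_eqF.
      rewrite e in kd; move: kd; set q := d x1 x0 / k => kd; nra.
    by rewrite pp_id; lra.
  have t1 : mu x1 * W x1 ^+ 2 * phi x1 / 4 <= A1.
    rewrite /A1 (bigD1_seq x1) //= -[X in X <= _]addr0; apply: lerD.
      have hp : 0 <= mu x1 * W x1 ^+ 2 * phi x1.
        by rewrite mulr_ge0 ?mulr_ge0 ?sqr_ge0 ?expR_ge0 // ltW // mu_gt0.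
      have : 4^-1 <= pp (1 - d x1 x0 / k) ^+ 2.
        have -> : (4 : R)^-1 = 2^-1 ^+ 2 by rewrite expr2; field.
        by apply: lerXn2r => //; rewrite nnegrE ?pp_ge0 // invr_ge0.
      move=> h; change (mu x1 * W x1 ^+ 2 * phi x1 / 4 <= mu x1 * W x1 ^+ 2 * phi x1 * pp (1 - d x1 x0 / k) ^+ 2).
      by apply: ler_wpM2l.
    apply: sumr_ge0 => x _.
    by rewrite mulr_ge0 ?mulr_ge0 ?sqr_ge0 ?expR_ge0 ?pp_ge0 // ltW // mu_gt0.
  have ck : 0 < c - kap by lra.
  have : (c - kap) * (mu x1 * W x1 ^+ 2 * phi x1 / 4) <= E / k ^+ 2 * Sf.
    apply: le_trans (_ : (c - kap) * A1 <= _).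
      by apply: ler_wpM2l => //; apply: ltW.
    have : E / k ^+ 2 * A2 <= E / k ^+ 2 * Sf.
      by apply: ler_wpM2l => //; rewrite divr_ge0 ?expR_ge0 ?sqr_ge0.
    move: en; rewrite -/E -/kap => en; nra.
  have kk : 0 < k ^+ 2 by rewrite exprn_gt0.
  rewrite -(ler_pM2r kk) => h.
  have e1 : (c - kap) * (mu x1 * W x1 ^+ 2 * phi x1) / 4 * k ^+ 2 =
    (c - kap) * (mu x1 * W x1 ^+ 2 * phi x1 / 4) * k ^+ 2 by ring.
  have e2 : E / k ^+ 2 * Sf * k ^+ 2 = E * Sf by field; rewrite gt_eqF.
  by rewrite e1 -e2.
set P := mu x1 * W x1 ^+ 2 * phi x1 in mainK.
have P0 : 0 <= P by rewrite /P mulr_ge0 ?mulr_ge0 ?sqr_ge0 ?expR_ge0 // ltW // mu_gt0.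
have ck : 0 < c - kap by lra.
have PA : P <= 0.
  rewrite leNgt; apply/negP => Pp.
  set A := (c - kap) * P / 4 in mainK.
  have Ap : 0 < A by rewrite /A divr_gt0 // mulr_gt0.
  set B := E * Sf in mainK.
  pose k := 1 + 2 * d x1 x0 + `|B| / A.
  have hB : 0 <= `|B| / A by rewrite divr_ge0 // ltW.
  have d0 := d_ge0 x1 x0.
  have := mainK k ltac:(rewrite /k; lra) ltac:(rewrite /k; lra).
  have eA : A * (`|B| / A) = `|B| by field; rewrite gt_eqF.
  have := ler_norm B.
  have kk : k <= k ^+ 2 by rewrite expr2 ler_peMr // /k; lra.
  have : A * k <= A * k ^+ 2 by rewrite ler_pM2l.
  rewrite /k mulrDr mulrDr eA.
  have : 0 <= A * (2 * d x1 x0) by apply: mulr_ge0; [exact: ltW | lra].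
  lra.
have : P = 0 by apply/eqP; rewrite eq_le PA P0.
rewrite /P => /eqP; rewrite !mulf_eq0 (gt_eqF (mu_gt0 x1)) /phi (gt_eqF (expR_gt0 _)) /=.
by rewrite orbF orbb => /eqP.
Qed.

End Helpers.

Theorem theorem3p1 (R : realType) (G : countType)
  (w : G -> G -> R) (mu : G -> R) (d : G -> G -> R) (V u : G -> R)
  (p beta : R) (x0 : G) :
  weighted_graph w mu ->
  infinite_set [set: G] ->
  connected_graph w ->
  pseudo_metric d ->
  intrinsic w mu d ->
  has_ubound (edge_lengths w d) ->
  (forall (x : G) (r : R), 0 < r -> finite_set (dball d x r)) ->
  0 < inf (range V) ->
  (forall x, laplacian w mu u x - V x * u x = 0) ->
  2 <= p -> 0 < beta ->
  beta ^+ 2 * expR (2 * jump_size w d * beta) < 2 * inf (range V) * p ->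
  in_lp_weighted mu (fun x => expR (- beta * d x x0)) p u ->
  forall x, u x = 0.
Proof.
move=> Hw _ _ Hd Hint Hub Hfin c0p Heq p2 b0 Hc Hl x.
set c0 := inf (range V) in c0p Hc.
have Vge : forall y, c0 <= V y.
  have hinf : has_inf (range V).
    case: (pselect (has_inf (range V))) => // /inf_out h.
    by move: c0p; rewrite /c0 h ltxx.
  by move=> y; apply: (ge_inf hinf.2); exists y.
set q := p / 2.
have q1 : 1 <= q by rewrite /q ler_pdivlMr // mul1r.
have q0 : q != 0 by rewrite gt_eqF // (lt_le_trans ltr01).
pose W y := `|u y| `^ q.
have W0 : forall y, 0 <= W y by move=> y; apply: powR_ge0.
have HW : forall x (S : seq G), uniq S -> (forall y, 0 < w x y -> y \in S) ->
    (q * c0) * mu x * W x <= \sum_(y <- S) (W y - W x) * w x y.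
  move=> z S uS nb.
  have hl := @lap_sum R G w mu Hw u z S uS nb.
  have hV : laplacian w mu u z = V z * u z by have := Heq z; lra.
  have [uz0|uzn] := eqVneq (u z) 0.
    have Wz : W z = 0 by rewrite /W uz0 normr0 powR0.
    rewrite Wz mulr0; apply: sumr_ge0 => y _; rewrite subr0.
    by rewrite mulr_ge0 // ?W0 // (@w_ge0 R G w mu Hw _ _).
  pose a : R := `|u z|.
  have a0 : 0 < a by rewrite /a normr_gt0.
  have key : forall y, q * a `^ (q - 1) * (u z / a) * ((u y - u z) * w z y) <=
                       (W y - W z) * w z y.
    move=> y; rewrite mulrA; apply: ler_wpM2r; first exact: (@w_ge0 R G w mu Hw _ _).
    have hb := @bernoulli_powR _ a `|u y| q a0 (normr_ge0 (u y)) q1.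
    apply: le_trans hb; rewrite -mulrA; apply: ler_wpM2l.
      by rewrite mulr_ge0 ?powR_ge0 // (le_trans ler01).
    have h1 : u z * u y <= a * `|u y|.
      by rewrite /a -normrM; apply: ler_norm.
    have ea : u z / a * (u y - u z) = (u z * u y) / a - (u z ^+ 2) / a by field; rewrite gt_eqF.
    have ua : u z ^+ 2 = a ^+ 2 by rewrite /a real_normK // num_real.
    rewrite ea ua.
    have -> : a ^+ 2 / a = a by field; rewrite gt_eqF.
    have : u z * u y / a <= `|u y|.
      by rewrite ler_pdivrMr // [X in _ <= X]mulrC.
    lra.
  apply: le_trans (ler_sum _ (fun y _ => key y)).
  rewrite -mulr_sumr -hl hV.
  have qpos : 0 < q by apply: (lt_le_trans ltr01).
  have uu : u z * u z = a * a by rewrite /a -normrM ger0_norm // -expr2 sqr_ge0.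
  have ha : q * a `^ (q - 1) * (u z / a) * (mu z * (V z * u z)) =
            (q * mu z * a `^ q) * V z.
    rewrite -(mulr_powRB1 (ltW a0) qpos).
    have -> : q * a `^ (q - 1) * (u z / a) * (mu z * (V z * u z)) =
              q * a `^ (q - 1) * mu z * V z * (u z * u z) / a by ring.
    by rewrite uu; field; rewrite gt_eqF.
  rewrite ha.
  have hmu := @mu_gt0 R G w mu Hw z.
  have hA : 0 <= q * mu z * a `^ q.
    by apply: mulr_ge0; [apply: mulr_ge0; apply: ltW | exact: powR_ge0].
  have -> : q * c0 * mu z * W z = (q * mu z * a `^ q) * c0 by rewrite /W -/a; ring.
  by apply: ler_wpM2l.
have Hc' : beta ^+ 2 * expR (2 * jump_size w d * beta) < 4 * (q * c0).
  have -> : 4 * (q * c0) = 2 * c0 * p by rewrite /q; field.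
  exact: Hc.
have Hl' : (\esum_(y in [set: G]) (W y ^+ 2 * expR (- beta * d y x0) * mu y)%:E < +oo)%E.
  move: Hl; rewrite /in_lp_weighted.
  have -> : \esum_(y in [set: G]) (W y ^+ 2 * expR (- beta * d y x0) * mu y)%:E =
            \esum_(y in [set: G]) (`|u y| `^ p * expR (- beta * d y x0) * mu y)%:E.
    apply: eq_esum => y _; congr (_ * _ * _)%:E.
    rewrite /W -powR_mulrn ?powR_ge0 // -powRrM; congr (_ `^ _).
    by rewrite /q; field.
  by [].
have hW := @key R G w mu d Hw Hd Hint Hub W (q * c0) beta x0 Hfin W0 b0 HW Hc' Hl' x.
by move: hW; rewrite /W => /powR_eq0_eq0 /eqP; rewrite normr_eq0 => /eqP.
Qed.
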